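(* In the setting described in the context, assume moreover that $\kappa_g>0$ everywhere on $\partial K$. Then, regarding $r$ as a function of $\omega$ (the support function), $$\frac{dr}{d\omega}=-\frac{\ell(r)c(r)}{c(x)}=-\frac{(1-k\,a(r))\,\ell(x)}{1-k\,a(x)} .$$
   Context: $M$ is $\mathbb{E}^2$, $\mathbb{S}^2$ or $\mathbb{H}^2$ of constant curvature $k$ ($k=0$, $k>0$, $k<0$). Functions: for $k>0$, $\ell(r)=\sin(\sqrt{k}r)/\sqrt{k}$, $a(r)=(1-\cos(\sqrt{k}r))/k$, $c(r)=\sqrt{k}\cot(\sqrt{k}r)$; for $k=0$, $\ell(r)=r$, $a(r)=r^2/2$, $c(r)=1/r$; for $k<0$, $\ell(r)=\sinh(\sqrt{-k}r)/\sqrt{-k}$, $a(r)=(1-\cosh(\sqrt{-k}r))/k$, $c(r)=\sqrt{-k}\coth(\sqrt{-k}r)$ (these make sense for negative $r$ too; $\ell(r)c(r)=1-ka(r)$). Setting: fix $O\in M$; $K\subset M$ is a compact convex set with nonempty interior and $C^2$ boundary (on $\mathbb{S}^2$, $K$ lies in the open hemisphere centered at $O$); $\partial K$ is oriented counterclockwise and parametrized by arclength $s$; $\kappa_g\ge0$ is its geodesic curvature. For $P=P(s)\in\partial K$ let $\lambda$ be the tangent geodesic (support line) of $K$ at $P$. For an angle $\omega$ let $\gamma_\omega$ be the unit-speed geodesic with $\gamma_\omega(0)=O$ and initial direction at angle $\omega$. Then $\omega=\omega(s)$ (chosen continuous in $s$) and $r=r(s)\in\mathbb{R}$ are determined by: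 $\lambda$ is perpendicular to $\gamma_\omega$ at $F=\gamma_\omega(r)$ and $K$ lies in the closed half-plane bounded by $\lambda$ containing $\gamma_\omega(t)$ for $t<r$. $x=x(s)$ is the signed distance along $\lambda$ from $F$ to $P$, positive iff $P$ lies on the ray from $F$ in the direction obtained by rotating $\gamma_\omega'(r)$ clockwise by $\pi/2$. *)

(* Defs.v *)
From Stdlib Require Import Reals.
From Coquelicot Require Import Coquelicot.
Open Scope R_scope.

Definition ell (k r : R) : R :=
  if Rlt_dec 0 k then sin (sqrt k * r) / sqrt k
  else if Rlt_dec k 0 then sinh (sqrt (- k) * r) / sqrt (- k)
  else r.

Definition acurv (k r : R) : R :=
  if Rlt_dec 0 k then (1 - cos (sqrt k * r)) / k
  else if Rlt_dec k 0 then (1 - cosh (sqrt (- k) * r)) / k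
  else r ^ 2 / 2.

Definition ccurv (k r : R) : R :=
  if Rlt_dec 0 k then sqrt k * (cos (sqrt k * r) / sin (sqrt k * r))
  else if Rlt_dec k 0 then sqrt (- k) * (cosh (sqrt (- k) * r) / sinh (sqrt (- k) * r))
  else 1 / r.

(** * The model surface M_k (E^2, S^2 or H^2 of curvature k)
    M_k = { q in R^3 | k (q1^2 + q2^2) + q3^2 = 1 } (for k <= 0 only the
    sheet q3 > 0), with Riemannian metric  dq1^2 + dq2^2 + dq3^2 / k
    (for k = 0, M_0 is the plane q3 = 1 with the Euclidean metric). *)
Record V3 := mkV3 { v1 : R; v2 : R; v3 : R }.

Definition vadd (u v : V3) : V3 := mkV3 (v1 u + v1 v) (v2 u + v2 v) (v3 u + v3 v).
Definition vscal (c : R) (v : V3) : V3 := mkV3 (c * v1 v) (c * v2 v) (c * v3 v).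
Definition vsub (u v : V3) : V3 := vadd u (vscal (-1) v).

Definition kdot (k : R) (u v : V3) : R := k * (v1 u * v1 v + v2 u * v2 v) + v3 u * v3 v.

Definition gmet (k : R) (u v : V3) : R :=
  v1 u * v1 v + v2 u * v2 v + (if Req_EM_T k 0 then 0 else v3 u * v3 v / k).

Definition inM (k : R) (q : V3) : Prop := kdot k q q = 1 /\ (0 < k \/ 0 < v3 q).
Definition tangentM (k : R) (p v : V3) : Prop := kdot k p v = 0.
Definition unitM (k : R) (v : V3) : Prop := gmet k v v = 1.

Definition Opt : V3 := mkV3 0 0 1.

Definition geod (k : R) (p u : V3) (t : R) : V3 :=
  vadd (vscal (1 - k * acurv k t) p) (vscal (ell k t) u).

Definition dirO (w : R) : V3 := mkV3 (cos w) (sin w) 0.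
Definition gam (k w t : R) : V3 := geod k Opt (dirO w) t.

(** rotation by +pi/2 (counterclockwise; at O it is (v1,v2,0) |-> (-v2,v1,0))
    in the tangent plane at p *)
Definition rotccw (k : R) (p v : V3) : V3 :=
  mkV3 (v2 p * v3 v - v3 p * v2 v) (v3 p * v1 v - v1 p * v3 v) (k * (v1 p * v2 v - v2 p * v1 v)).
Definition rotcw (k : R) (p v : V3) : V3 := vscal (-1) (rotccw k p v).

Definition vderive (c : R -> V3) (t : R) : V3 :=
  mkV3 (Derive (fun s => v1 (c s)) t) (Derive (fun s => v2 (c s)) t) (Derive (fun s => v3 (c s)) t).

Definition dinf (p q : V3) : R :=
  Rmax (Rabs (v1 p - v1 q)) (Rmax (Rabs (v2 p - v2 q)) (Rabs (v3 p - v3 q))).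

Definition interiorM (k : R) (K : V3 -> Prop) (q : V3) : Prop :=
  K q /\ exists eps, 0 < eps /\ forall q', inM k q' -> dinf q q' < eps -> K q'.

Definition boundaryM (k : R) (K : V3 -> Prop) (q : V3) : Prop :=
  K q /\ ~ interiorM k K q.

Definition closedS (K : V3 -> Prop) : Prop :=
  forall q, (forall eps, 0 < eps -> exists q', K q' /\ dinf q q' < eps) -> K q.

Definition boundedS (K : V3 -> Prop) : Prop :=
  exists B, forall q, K q -> Rabs (v1 q) <= B /\ Rabs (v2 q) <= B /\ Rabs (v3 q) <= B.

(** geodesic convexity: the (unique minimizing) geodesic segment between
    two points of K lies in K *)
Definition convexM (k : R) (K : V3 -> Prop) : Prop :=
  forall p q u d, K p -> K q -> tangentM k p u -> unitM k u -> 0 <= d ->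
    (0 < k -> d * sqrt k < PI) -> geod k p u d = q ->
    forall t, 0 <= t <= d -> K (geod k p u t).

(** K compact convex with nonempty interior; on S^2 inside the open
    hemisphere centered at O *)
Definition convex_body (k : R) (K : V3 -> Prop) : Prop :=
  (forall q, K q -> inM k q) /\ closedS K /\ boundedS K /\ convexM k K /\
  (exists q, interiorM k K q) /\
  (0 < k -> forall q, K q -> 0 < v3 q).

Definition C2fun (f : R -> R) : Prop :=
  forall s, ex_derive f s /\ ex_derive (Derive f) s /\ continuity_pt (Derive (Derive f)) s.

Definition C2curve (P : R -> V3) : Prop :=
  C2fun (fun s => v1 (P s)) /\ C2fun (fun s => v2 (P s)) /\ C2fun (fun s => v3 (P s)).

Definition arclength_boundary (k : R) (K : V3 -> Prop) (P : R -> V3) (L : R) : Prop :=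
  0 < L /\ (forall s, P (s + L) = P s) /\
  (forall s1 s2, 0 <= s1 < L -> 0 <= s2 < L -> P s1 = P s2 -> s1 = s2) /\
  (forall q, boundaryM k K q <-> exists s, P s = q) /\
  C2curve P /\
  (forall s, unitM k (vderive P s)).

(** counterclockwise orientation: K lies to the left of the boundary, i.e.
    the geodesic leaving P(s) in the direction of the left normal enters the interior *)
Definition ccw_oriented (k : R) (K : V3 -> Prop) (P : R -> V3) : Prop :=
  forall s, exists delta, 0 < delta /\
    forall t, 0 < t < delta -> interiorM k K (geod k (P s) (rotccw k (P s) (vderive P s)) t).

Definition kappa_g (k : R) (P : R -> V3) (s : R) : R :=
  gmet k (vderive (vderive P) s) (rotccw k (P s) (vderive P s)).

(** (w, rr, xx) = (omega(s), r(s), x(s)) at the point P(s):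
    - lambda = tangent geodesic t |-> geod k (P s) (P' s) t;
    - lambda passes through F = gamma_w(rr) and is perpendicular there to gamma_w;
    - K lies in the closed half-plane bounded by lambda containing gamma_w(t)
      for t slightly less than rr, i.e. on the side opposite to N = gamma_w'(rr);
    - on S^2, rr is the signed distance from O to lambda (|rr| < pi/(2 sqrt k));
    - xx is the signed distance along lambda from F to P(s), positive towards
      the direction obtained by rotating N clockwise by pi/2. *)
Definition support_data (k : R) (K : V3 -> Prop) (P : R -> V3) (s w rr xx : R) : Prop :=
  let F := gam k w rr in
  let N := vderive (gam k w) rr in
  (exists t0, F = geod k (P s) (vderive P s) t0 /\
              gmet k N (vderive (geod k (P s) (vderive P s)) t0) = 0) /\
  (forall q, K q -> gmet k (vsub q F) N <= 0) /\
  (0 < k -> Rabs rr * sqrt k < PI / 2) /\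
  P s = geod k F (rotcw k F N) xx /\
  (0 < k -> Rabs xx * sqrt k < PI).

(* Main.v *)
Require Import Defs.
From Stdlib Require Import Reals Lra Lia Psatz ClassicalEpsilon.
From Coquelicot Require Import Coquelicot.
Open Scope R_scope.


Definition Cf (k y : R) : R := 1 - k * acurv k y.

Lemma spec_pos k y : 0 < k -> ell k y = sin (sqrt k * y) / sqrt k /\ Cf k y = cos (sqrt k * y).
Proof.
  intros Hk. unfold ell, Cf, acurv. destruct (Rlt_dec 0 k); [|lra].
  split; [reflexivity| field; lra].
Qed.

Lemma spec_neg k y : k < 0 -> ell k y = sinh (sqrt (-k) * y) / sqrt (-k) /\ Cf k y = cosh (sqrt (-k) * y).
Proof.
  intros Hk. unfold ell, Cf, acurv. destruct (Rlt_dec 0 k); [lra|].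
  destruct (Rlt_dec k 0); [|lra].
  split; [reflexivity| field; lra].
Qed.

Lemma spec_zero k y : k = 0 -> ell k y = y /\ Cf k y = 1.
Proof.
  intros Hk. subst. unfold ell, Cf, acurv. destruct (Rlt_dec 0 0); [lra|].
  destruct (Rlt_dec 0 0); [lra|]. split; [reflexivity|ring].
Qed.

Lemma cosh_sinh2 z : cosh z * cosh z - sinh z * sinh z = 1.
Proof.
  unfold cosh, sinh. replace (-z) with (-(z)) by ring.
  assert (exp z * exp (- z) = 1). { rewrite <- exp_plus. replace (z + - z) with 0 by ring. apply exp_0. }
  nra.
Qed.

Lemma pyth k y : Cf k y * Cf k y + k * (ell k y * ell k y) = 1.
Proof.
  destruct (Rlt_dec 0 k) as [Hk|Hk].
  - destruct (spec_pos k y Hk) as [-> ->].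
    assert (Hs : sqrt k * sqrt k = k) by (apply sqrt_sqrt; lra).
    assert (0 < sqrt k) by (apply sqrt_lt_R0; lra).
    pose proof (sin2_cos2 (sqrt k * y)). unfold Rsqr in H0.
    replace (k * (sin (sqrt k * y) / sqrt k * (sin (sqrt k * y) / sqrt k))) with (sin (sqrt k * y) * sin (sqrt k * y)).
    lra. set (a := sqrt k) in *. set (u := sin (a * y)). rewrite <- Hs. field. lra.
  - destruct (Rlt_dec k 0) as [Hk'|Hk'].
    + destruct (spec_neg k y Hk') as [-> ->].
      assert (Hs : sqrt (-k) * sqrt (-k) = -k) by (apply sqrt_sqrt; lra).
      assert (0 < sqrt (-k)) by (apply sqrt_lt_R0; lra).
      pose proof (cosh_sinh2 (sqrt (-k) * y)).
      replace (k * (sinh (sqrt (-k) * y) / sqrt (- k) * (sinh (sqrt (-k) * y) / sqrt (-k)))) with (- (sinh (sqrt (-k) * y) * sinh (sqrt (-k) * y))).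
      lra. set (a := sqrt (-k)) in *. set (u := sinh (a * y)). replace k with (- (a * a)) by lra. field. lra.
    + assert (k = 0) by lra. destruct (spec_zero k y H) as [-> ->]. subst; ring.
Qed.

Lemma deriv_ell k y : is_derive (ell k) y (Cf k y).
Proof.
  destruct (Rlt_dec 0 k) as [Hk|Hk].
  - apply is_derive_ext with (fun y => sin (sqrt k * y) / sqrt k).
    { intros t; symmetry; apply (spec_pos k t Hk). }
    rewrite (proj2 (spec_pos k y Hk)).
    assert (0 < sqrt k) by (apply sqrt_lt_R0; lra).
    auto_derive; [auto|]. field. lra.
  - destruct (Rlt_dec k 0) as [Hk'|Hk'].
    + apply is_derive_ext with (fun y => sinh (sqrt (-k) * y) / sqrt (-k)).
      { intros t; symmetry; apply (spec_neg k t Hk'). }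
      rewrite (proj2 (spec_neg k y Hk')).
      assert (0 < sqrt (-k)) by (apply sqrt_lt_R0; lra).
      unfold sinh, cosh. auto_derive; [auto|]. field. lra.
    + assert (k = 0) by lra.
      apply is_derive_ext with (fun y => y).
      { intros t; symmetry; apply (spec_zero k t H). }
      rewrite (proj2 (spec_zero k y H)). auto_derive; auto.
Qed.

Lemma deriv_Cf k y : is_derive (Cf k) y (- k * ell k y).
Proof.
  destruct (Rlt_dec 0 k) as [Hk|Hk].
  - apply is_derive_ext with (fun y => cos (sqrt k * y)).
    { intros t; symmetry; apply (spec_pos k t Hk). }
    rewrite (proj1 (spec_pos k y Hk)).
    assert (Hs : sqrt k * sqrt k = k) by (apply sqrt_sqrt; lra).
    assert (0 < sqrt k) by (apply sqrt_lt_R0; lra).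
    auto_derive; [auto|]. set (a := sqrt k) in *. rewrite <- Hs. field. lra.
  - destruct (Rlt_dec k 0) as [Hk'|Hk'].
    + apply is_derive_ext with (fun y => cosh (sqrt (-k) * y)).
      { intros t; symmetry; apply (spec_neg k t Hk'). }
      rewrite (proj1 (spec_neg k y Hk')).
      assert (Hs : sqrt (-k) * sqrt (-k) = -k) by (apply sqrt_sqrt; lra).
      assert (0 < sqrt (-k)) by (apply sqrt_lt_R0; lra).
      unfold sinh, cosh. auto_derive; [auto|].
      set (a := sqrt (-k)) in *. replace k with (- (a * a)) by lra. field. lra.
    + assert (k = 0) by lra.
      apply is_derive_ext with (fun y => 1).
      { intros t; symmetry; apply (spec_zero k t H). }
      subst. auto_derive; auto. ring.
Qed.

Definition Dk (k y : R) : Prop := 0 < k -> Rabs y * sqrt k < PI/2.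

Lemma Dk_bounds k y : 0 < k -> Dk k y -> - (PI/2) < sqrt k * y < PI/2.
Proof.
  intros Hk HD. specialize (HD Hk).
  assert (0 < sqrt k) by (apply sqrt_lt_R0; lra).
  assert (Rabs (sqrt k * y) < PI/2) by (rewrite Rabs_mult, Rabs_right by lra; lra).
  apply Rabs_def2 in H0. lra.
Qed.

Lemma cosh_pos z : 0 < cosh z.
Proof. unfold cosh. pose proof (exp_pos z). pose proof (exp_pos (-z)). lra. Qed.

Lemma Cf_pos k y : Dk k y -> 0 < Cf k y.
Proof.
  intros HD. destruct (Rlt_dec 0 k) as [Hk|Hk].
  - rewrite (proj2 (spec_pos k y Hk)). destruct (Dk_bounds k y Hk HD). apply cos_gt_0; lra.
  - destruct (Rlt_dec k 0) as [Hk'|Hk'].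
    + rewrite (proj2 (spec_neg k y Hk')). apply cosh_pos.
    + rewrite (proj2 (spec_zero k y ltac:(lra))). lra.
Qed.

Lemma ell_nz k y : Dk k y -> y <> 0 -> ell k y <> 0.
Proof.
  intros HD Hy. destruct (Rlt_dec 0 k) as [Hk|Hk].
  - rewrite (proj1 (spec_pos k y Hk)). destruct (Dk_bounds k y Hk HD).
    assert (0 < sqrt k) by (apply sqrt_lt_R0; lra).
    assert (PI/2 < PI) by (pose proof PI_RGT_0; lra).
    destruct (Rlt_dec 0 y).
    + assert (0 < sin (sqrt k * y)) by (apply sin_gt_0; nra).
      apply Rgt_not_eq. unfold Rdiv. apply Rmult_gt_0_compat; auto. apply Rinv_0_lt_compat; auto.
    + assert (0 < sin (- (sqrt k * y))) by (apply sin_gt_0; nra).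
      rewrite sin_neg in H3. intro Hc. unfold Rdiv in Hc. apply Rmult_integral in Hc.
      destruct Hc; [lra|]. pose proof (Rinv_0_lt_compat _ H1). lra.
  - destruct (Rlt_dec k 0) as [Hk'|Hk'].
    + rewrite (proj1 (spec_neg k y Hk')).
      assert (0 < sqrt (-k)) by (apply sqrt_lt_R0; lra).
      intro Hc. unfold Rdiv in Hc. apply Rmult_integral in Hc. destruct Hc as [Hc|Hc].
      * destruct (Rlt_dec 0 y).
        -- pose proof (sinh_lt 0 (sqrt (-k) * y) ltac:(nra)). rewrite sinh_0 in H0. lra.
        -- pose proof (sinh_lt (sqrt (-k) * y) 0 ltac:(assert (y < 0) by lra; nra)). rewrite sinh_0 in H0. lra.
      * pose proof (Rinv_0_lt_compat _ H). lra.
    + rewrite (proj1 (spec_zero k y ltac:(lra))). auto.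
Qed.

Lemma ccurv_eq k y : ccurv k y = Cf k y / ell k y.
Proof.
  destruct (Rlt_dec 0 k) as [Hk|Hk].
  - rewrite (proj1 (spec_pos k y Hk)), (proj2 (spec_pos k y Hk)).
    unfold ccurv. destruct (Rlt_dec 0 k); [|lra]. unfold Rdiv. rewrite Rinv_mult, Rinv_inv. ring.
  - destruct (Rlt_dec k 0) as [Hk'|Hk'].
    + rewrite (proj1 (spec_neg k y Hk')), (proj2 (spec_neg k y Hk')).
      unfold ccurv. destruct (Rlt_dec 0 k); [lra|]. destruct (Rlt_dec k 0); [|lra].
      unfold Rdiv. rewrite Rinv_mult, Rinv_inv. ring.
    + rewrite (proj1 (spec_zero k y ltac:(lra))), (proj2 (spec_zero k y ltac:(lra))).
      unfold ccurv. destruct (Rlt_dec 0 k); [lra|]. destruct (Rlt_dec k 0); [lra|]. reflexivity.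
Qed.



Lemma tau_deriv k y : Dk k y ->
  is_derive (fun y => ell k y / Cf k y) y (/ (Cf k y ^ 2)).
Proof.
  intros HD. pose proof (Cf_pos k y HD).
  replace (/ (Cf k y ^ 2)) with ((Cf k y * Cf k y - ell k y * (- k * ell k y)) / Cf k y ^ 2).
  - apply is_derive_div; [apply deriv_ell|apply deriv_Cf|lra].
  - pose proof (pyth k y). replace (Cf k y * Cf k y - ell k y * (- k * ell k y)) with 1 by lra.
    unfold Rdiv. ring.
Qed.

Lemma tau_incr k y1 y2 : Dk k y1 -> Dk k y2 -> y1 < y2 -> ell k y1 / Cf k y1 < ell k y2 / Cf k y2.
Proof.
  intros H1 H2 Hlt. destruct (Rlt_dec 0 k) as [Hk|Hk].
  - assert (0 < sqrt k) by (apply sqrt_lt_R0; lra).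
    assert (HDk : forall y, - (PI/2) / sqrt k < y -> y < (PI/2) / sqrt k -> Dk k y).
    { intros y Ha Hb _. apply (Rmult_lt_compat_r (sqrt k)) in Ha; auto.
      apply (Rmult_lt_compat_r (sqrt k)) in Hb; auto.
      replace (- (PI/2)/sqrt k * sqrt k) with (-(PI/2)) in Ha by (field; lra).
      replace ((PI/2)/sqrt k * sqrt k) with (PI/2) in Hb by (field; lra).
      rewrite <- (Rabs_right (sqrt k)) by lra. rewrite <- Rabs_mult. apply Rabs_def1; lra. }
    destruct (Dk_bounds k y1 Hk H1). destruct (Dk_bounds k y2 Hk H2).
    apply (incr_function (fun y => ell k y / Cf k y) (Finite (- (PI/2) / sqrt k)) (Finite ((PI/2)/sqrt k))
            (fun y => / (Cf k y ^ 2))); simpl.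
    + intros y Ha Hb. apply tau_deriv. apply HDk; auto.
    + intros y Ha Hb. pose proof (Cf_pos k y (HDk y Ha Hb)). apply Rinv_0_lt_compat. nra.
    + apply (Rmult_lt_reg_r (sqrt k)); auto. replace (- (PI/2)/sqrt k * sqrt k) with (-(PI/2)) by (field; lra). lra.
    + auto.
    + apply (Rmult_lt_reg_r (sqrt k)); auto. replace ((PI/2)/sqrt k * sqrt k) with (PI/2) by (field; lra). lra.
  - assert (HDk : forall y, Dk k y) by (intros y Hy; lra).
    apply (incr_function (fun y => ell k y / Cf k y) m_infty p_infty (fun y => / (Cf k y ^ 2))); simpl; auto.
    + intros y _ _. apply tau_deriv. auto.
    + intros y _ _. pose proof (Cf_pos k y (HDk y)). apply Rinv_0_lt_compat. nra.
Qed.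


Lemma alg_ab k c sn Cr lr Cx lx a b T3 :
  c*c+sn*sn = 1 -> Cr*Cr + k*(lr*lr) = 1 -> Cx*Cx + k*(lx*lx) = 1 -> 0 < Cr -> 0 < Cx ->
  Cr*a - lr*T3 = 0 ->
  k*(Cx*lr*a - lx*b) + Cx*Cr*T3 = 0 ->
  T3 = k*lx*Cr*b/Cx /\ a = k*lx*lr*b/Cx.
Proof.
  intros Hcs Hr Hx Hcr Hcx E1 E2.
  assert (K1 : Cx*T3 - k*lx*Cr*b = 0).
  { assert (Cx*T3 - k*lx*Cr*b = Cr * (k*(Cx*lr*a - lx*b) + Cx*Cr*T3) - k*Cx*lr*(Cr*a - lr*T3)
       + Cx*T3*(1 - (Cr*Cr + k*(lr*lr)))) by ring.
    rewrite H, E2, E1, Hr. ring. }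
  assert (HT3 : T3 = k*lx*Cr*b/Cx) by (apply (Rmult_eq_reg_l Cx); [|lra]; field_simplify; lra).
  split; auto.
  apply (Rmult_eq_reg_l Cr); [|lra].
  replace (Cr*a) with (lr*T3) by lra. rewrite HT3. field. lra.
Qed.

Lemma alg_main k c sn Cr lr Cx lx a b T3 :
  c*c+sn*sn = 1 -> Cr*Cr + k*(lr*lr) = 1 -> Cx*Cx + k*(lx*lx) = 1 -> 0 < Cr -> 0 < Cx ->
  T3 = k*lx*Cr*b/Cx -> a = k*lx*lr*b/Cx ->
  let T1 := a*c - b*sn in let T2 := a*sn + b*c in
  let P1 := Cx*lr*c + lx*sn in let P2 := Cx*lr*sn - lx*c in let P3 := Cx*Cr in
  let mu := - b / Cx in
  T3*(-P1*sn + P2*c) - P3*(-T1*sn + T2*c) = mu*Cr /\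
  P2*T3 - P3*T2 = mu*(Cr*c) /\ P3*T1 - P1*T3 = mu*(Cr*sn) /\ k*(P1*T2 - P2*T1) = mu*(-k*lr).
Proof.
  intros Hcs Hr Hx Hcr Hcx HT3 Ha T1 T2 P1 P2 P3 mu.
  unfold T1, T2, P1, P2, P3, mu. rewrite HT3, Ha.
  repeat split.
  - replace (k * lx * Cr * b / Cx * (- (Cx * lr * c + lx * sn) * sn + (Cx * lr * sn - lx * c) * c) -
      Cx * Cr * (- (k * lx * lr * b / Cx * c - b * sn) * sn + (k * lx * lr * b / Cx * sn + b * c) * c))
      with (-(Cr*b/Cx)*(c*c+sn*sn)*(Cx*Cx + k*(lx*lx))) by (field; lra).
    rewrite Hcs, Hx. field. lra.
  - replace ((Cx * lr * sn - lx * c) * (k * lx * Cr * b / Cx) - Cx * Cr * (k * lx * lr * b / Cx * sn + b * c))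
      with (-(Cr*b*c/Cx)*(Cx*Cx + k*(lx*lx))) by (field; lra).
    rewrite Hx. field. lra.
  - replace (Cx * Cr * (k * lx * lr * b / Cx * c - b * sn) - (Cx * lr * c + lx * sn) * (k * lx * Cr * b / Cx))
      with (-(Cr*b*sn/Cx)*(Cx*Cx + k*(lx*lx))) by (field; lra).
    rewrite Hx. field. lra.
  - replace (k * ((Cx * lr * c + lx * sn) * (k * lx * lr * b / Cx * sn + b * c) -
      (Cx * lr * sn - lx * c) * (k * lx * lr * b / Cx * c - b * sn)))
      with (k*(lr*b/Cx)*(c*c+sn*sn)*(Cx*Cx + k*(lx*lx))) by (field; lra).
    rewrite Hcs, Hx. field. lra.
Qed.

Lemma alg_mu k c sn Cr lr Cx lx a b T3 :
  c*c+sn*sn = 1 -> Cr*Cr + k*(lr*lr) = 1 -> Cx*Cx + k*(lx*lx) = 1 -> 0 < Cr -> 0 < Cx ->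
  T3 = k*lx*Cr*b/Cx -> a = k*lx*lr*b/Cx ->
  let T1 := a*c - b*sn in let T2 := a*sn + b*c in
  (k <> 0 -> k*(T1*T1+T2*T2) + T3*T3 = k) ->
  (k = 0 -> T1*T1+T2*T2 = 1) ->
  (- b / Cx) * (- b / Cx) = 1.
Proof.
  intros Hcs Hr Hx Hcr Hcx HT3 Ha T1 T2 H1 H0.
  assert (HT : T1*T1 + T2*T2 = a*a + b*b).
  { unfold T1, T2. replace ((a * c - b * sn) * (a * c - b * sn) + (a * sn + b * c) * (a * sn + b * c))
      with ((a*a+b*b)*(c*c+sn*sn)) by ring. rewrite Hcs. ring. }
  destruct (Req_dec k 0) as [Hk|Hk].
  - subst k. specialize (H0 eq_refl). rewrite HT, Ha in H0.
    assert (Cx*Cx = 1) by lra.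
    assert (b*b = 1) by (rewrite <- H0; field; lra).
    replace (- b / Cx * (- b / Cx)) with (b*b/(Cx*Cx)) by (field; lra). rewrite H, H2. field.
  - specialize (H1 Hk). rewrite HT, Ha, HT3 in H1.
    assert (E : k*(k*lx*lr*b/Cx*(k*lx*lr*b/Cx) + b*b) + k*lx*Cr*b/Cx*(k*lx*Cr*b/Cx)
              = k*b*b/(Cx*Cx) * (k*(lx*lx)*(Cr*Cr + k*(lr*lr)) + Cx*Cx)) by (field; lra).
    assert (E2 : k*(lx*lx)*(Cr*Cr + k*(lr*lr)) + Cx*Cx = 1) by (rewrite Hr; lra).
    rewrite E2, Rmult_1_r in E.
    assert (k*b*b/(Cx*Cx) = k) by lra.
    assert (b*b/(Cx*Cx) = 1).
    { apply (Rmult_eq_reg_l k); [|auto]. rewrite <- H at 2. field. lra. }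
    replace (- b / Cx * (- b / Cx)) with (b*b/(Cx*Cx)) by (field; lra). auto.
Qed.


Lemma cont_iff f x : continuity_pt f x <->
  (forall eps, 0 < eps -> exists d, 0 < d /\ forall y, Rabs (y - x) < d -> Rabs (f y - f x) < eps).
Proof.
  unfold continuity_pt, continue_in, limit1_in, limit_in. simpl. unfold R_dist, D_x, no_cond.
  split.
  - intros H eps He. destruct (H eps He) as [d [Hd H']]. exists d. split; auto.
    intros y Hy. destruct (Req_dec y x) as [->|Hne].
    + replace (f x - f x) with 0 by ring. rewrite Rabs_R0. auto.
    + apply H'. split; auto.
  - intros H eps He. destruct (H eps He) as [d [Hd H']]. exists d. split; auto.
    intros y [_ Hy]. apply H'. auto.
Qed.

Definition slope (f : R -> R) (y0 l y : R) : R :=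
  if Req_EM_T y y0 then l else (f y - f y0) / (y - y0).

Lemma slope_eq f y0 l y : f y - f y0 = (y - y0) * slope f y0 l y.
Proof.
  unfold slope. destruct (Req_EM_T y y0) as [->|H].
  - ring.
  - field. lra.
Qed.

Lemma slope_at f y0 l : slope f y0 l y0 = l.
Proof. unfold slope. destruct (Req_EM_T y0 y0); [auto|lra]. Qed.

Lemma slope_cont f y0 l : is_derive f y0 l -> continuity_pt (slope f y0 l) y0.
Proof.
  intros H. apply is_derive_Reals in H. apply cont_iff. intros eps He.
  destruct (H eps He) as [d Hd]. exists d. split; [apply cond_pos|].
  intros y Hy. rewrite slope_at. unfold slope. destruct (Req_EM_T y y0) as [->|Hne].
  - replace (l - l) with 0 by ring. rewrite Rabs_R0. auto.
  - specialize (Hd (y - y0)). replace (y0 + (y - y0)) with y in Hd by ring.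
    apply Hd; auto. lra.
Qed.

Lemma deriv_from_slope f s S :
  (exists d, 0 < d /\ forall t, Rabs (t - s) < d -> f t - f s = (t - s) * S t) ->
  continuity_pt S s -> is_derive f s (S s).
Proof.
  intros [d0 [Hd0 Heq]] Hc. apply is_derive_Reals. intros eps He.
  pose proof (proj1 (cont_iff _ _) Hc) as Hc2. destruct (Hc2 eps He) as [d1 [Hd1 H1]].
  assert (Hm : 0 < Rmin d0 d1) by (apply Rmin_pos; auto).
  exists (mkposreal _ Hm). simpl. intros h Hh Hlt.
  assert (Ha : Rabs (s + h - s) < d0).
  { replace (s + h - s) with h by ring. eapply Rlt_le_trans; [eauto|apply Rmin_l]. }
  rewrite (Heq _ Ha). replace (s + h - s) with h by ring.
  replace (h * S (s + h) / h) with (S (s+h)) by (field; auto).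
  apply H1. replace (s + h - s) with h by ring. eapply Rlt_le_trans; [eauto|apply Rmin_r].
Qed.

Lemma cont_mono (tau phi : R -> R) (D : R -> Prop) s :
  (forall y1 y2, D y1 -> D y2 -> y1 < y2 -> tau y1 < tau y2) ->
  (exists e, 0 < e /\ forall y, Rabs (y - phi s) < e -> D y) ->
  (exists d, 0 < d /\ forall t, Rabs (t - s) < d -> D (phi t)) ->
  (forall eps, 0 < eps -> exists d, 0 < d /\ forall t, Rabs (t - s) < d -> Rabs (tau (phi t) - tau (phi s)) < eps) ->
  continuity_pt phi s.
Proof.
  intros Hm [e [He HD]] [d0 [Hd0 HDt]] Hc. apply cont_iff. intros eps Heps.
  set (e' := Rmin eps (e/2)).
  assert (He' : 0 < e') by (apply Rmin_pos; lra).
  assert (Hle1 : e' <= eps) by apply Rmin_l.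
  assert (Hle2 : e' <= e/2) by apply Rmin_r.
  assert (Dp : D (phi s + e')) by (apply HD; replace (phi s + e' - phi s) with e' by ring; rewrite Rabs_right; lra).
  assert (Dm : D (phi s - e')) by (apply HD; replace (phi s - e' - phi s) with (-e') by ring; rewrite Rabs_Ropp, Rabs_right; lra).
  assert (D0 : D (phi s)) by (apply HD; replace (phi s - phi s) with 0 by ring; rewrite Rabs_R0; lra).
  assert (Hp : tau (phi s) < tau (phi s + e')) by (apply Hm; auto; lra).
  assert (Hq : tau (phi s - e') < tau (phi s)) by (apply Hm; auto; lra).
  set (m := Rmin (tau (phi s + e') - tau (phi s)) (tau (phi s) - tau (phi s - e'))).
  assert (Hmp : 0 < m) by (apply Rmin_pos; lra).
  destruct (Hc m Hmp) as [d1 [Hd1 H1]].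
  exists (Rmin d0 d1). split; [apply Rmin_pos; auto|].
  intros t Ht.
  pose proof (Rmin_l d0 d1). pose proof (Rmin_r d0 d1).
  assert (Ht0 : Rabs (t - s) < d0) by lra.
  assert (Ht1 : Rabs (t - s) < d1) by lra.
  specialize (H1 t Ht1). specialize (HDt t Ht0).
  assert (m <= tau (phi s + e') - tau (phi s)) by apply Rmin_l.
  assert (m <= tau (phi s) - tau (phi s - e')) by apply Rmin_r.
  apply Rabs_def2 in H1. destruct H1 as [H1a H1b].
  apply Rabs_def1.
  - destruct (Rlt_le_dec (phi t - phi s) e') as [Hl|Hl]; [lra|].
    exfalso. destruct (Req_dec (phi t) (phi s + e')) as [Heq|Hne].
    + rewrite Heq in H1a. lra.
    + assert (tau (phi s + e') < tau (phi t)) by (apply Hm; auto; lra). lra.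
  - destruct (Rlt_le_dec (- e') (phi t - phi s)) as [Hl|Hl]; [lra|].
    exfalso. destruct (Req_dec (phi t) (phi s - e')) as [Heq|Hne].
    + rewrite Heq in H1b. lra.
    + assert (tau (phi t) < tau (phi s - e')) by (apply Hm; auto; lra). lra.
Qed.

Lemma cplus f g x : continuity_pt f x -> continuity_pt g x -> continuity_pt (fun t => f t + g t) x.
Proof. intros H1 H2. exact (continuity_pt_plus f g x H1 H2). Qed.
Lemma cminus f g x : continuity_pt f x -> continuity_pt g x -> continuity_pt (fun t => f t - g t) x.
Proof. intros H1 H2. exact (continuity_pt_minus f g x H1 H2). Qed.
Lemma cmult f g x : continuity_pt f x -> continuity_pt g x -> continuity_pt (fun t => f t * g t) x.
Proof. intros H1 H2. exact (continuity_pt_mult f g x H1 H2). Qed.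
Lemma cdiv f g x : continuity_pt f x -> continuity_pt g x -> g x <> 0 -> continuity_pt (fun t => f t / g t) x.
Proof. intros H1 H2 H3. exact (continuity_pt_div f g x H1 H2 H3). Qed.
Lemma copp f x : continuity_pt f x -> continuity_pt (fun t => - f t) x.
Proof. intros H1. exact (continuity_pt_opp f x H1). Qed.
Lemma ccomp f g x : continuity_pt g x -> continuity_pt f (g x) -> continuity_pt (fun t => f (g t)) x.
Proof. intros H1 H2. exact (continuity_pt_comp g f x H1 H2). Qed.
Lemma cconst (a x : R) : continuity_pt (fun _ => a) x.
Proof. apply continuity_pt_const. intros u v; reflexivity. Qed.
Lemma cderiv (f : R -> R) (x l : R) : is_derive f x l -> continuity_pt f x.
Proof. intros H. apply derivable_continuous_pt. exists l. apply is_derive_Reals. auto. Qed.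

Lemma cont_nz f x : continuity_pt f x -> f x <> 0 -> exists d, 0 < d /\ forall t, Rabs (t - x) < d -> f t <> 0.
Proof.
  intros Hc Hn. pose proof (proj1 (cont_iff f x) Hc) as H.
  destruct (H (Rabs (f x))) as [d [Hd Hd']]. { apply Rabs_pos_lt; auto. }
  exists d. split; auto. intros t Ht Hft. specialize (Hd' t Ht). rewrite Hft in Hd'.
  replace (0 - f x) with (- f x) in Hd' by ring. rewrite Rabs_Ropp in Hd'. lra.
Qed.

Lemma dplus f g x a b : is_derive f x a -> is_derive g x b -> is_derive (fun t => f t + g t) x (a + b).
Proof. intros H1 H2. exact (is_derive_plus f g x a b H1 H2). Qed.
Lemma dminus f g x a b : is_derive f x a -> is_derive g x b -> is_derive (fun t => f t - g t) x (a - b).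
Proof. intros H1 H2. exact (is_derive_minus f g x a b H1 H2). Qed.
Lemma dmult f g x a b : is_derive f x a -> is_derive g x b -> is_derive (fun t => f t * g t) x (a * g x + f x * b).
Proof. intros H1 H2. exact (is_derive_mult f g x a b H1 H2 Rmult_comm). Qed.
Lemma dconst (c x : R) : is_derive (fun _ => c) x 0.
Proof. exact (is_derive_const c x). Qed.
Lemma dcomp f g x a b : is_derive f (g x) a -> is_derive g x b -> is_derive (fun t => f (g t)) x (b * a).
Proof. intros H1 H2. exact (is_derive_comp f g x a b H1 H2). Qed.


Lemma der_lin k a b t : is_derive (fun s => Cf k s * a + ell k s * b) t (-k*ell k t * a + Cf k t * b).
Proof.
  eapply is_derive_ext with (f := fun s => Cf k s * a + ell k s * b); [intros; reflexivity|].
  replace (-k*ell k t * a + Cf k t * b) with ((-k*ell k t * a + Cf k t * 0) + (Cf k t * b + ell k t * 0)) by ring.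
  apply dplus; apply dmult; try apply dconst; [apply deriv_Cf|apply deriv_ell].
Qed.

Lemma vderive_geod k p u t : vderive (geod k p u) t =
  mkV3 (-k*ell k t * v1 p + Cf k t * v1 u) (-k*ell k t * v2 p + Cf k t * v2 u) (-k*ell k t * v3 p + Cf k t * v3 u).
Proof.
  unfold vderive, geod, vadd, vscal. simpl. f_equal; apply is_derive_unique; apply der_lin.
Qed.

Lemma sd_extract k K P s w rr xx :
  support_data k K P s w rr xx ->
  (k = 0 -> v3 (vderive P s) = 0) ->
  0 < Cf k rr ->
  v1 (P s) = Cf k xx * ell k rr * cos w + ell k xx * sin w /\
  v2 (P s) = Cf k xx * ell k rr * sin w - ell k xx * cos w /\
  v3 (P s) = Cf k xx * Cf k rr /\
  Cf k rr * (v1 (vderive P s) * cos w + v2 (vderive P s) * sin w) - ell k rr * v3 (vderive P s) = 0.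
Proof.
  intros [[t0 [HF HN]] [_ [_ [HP _]]]] Hk0 HCr.
  change (vderive (gam k w) rr) with (vderive (geod k Opt (dirO w)) rr) in *.
  rewrite vderive_geod in HN, HP. rewrite vderive_geod in HN.
  unfold gam in HF, HN, HP.
  set (T := vderive P s) in *.
  pose proof (pyth k rr) as Hr. pose proof (pyth k t0) as Ht. pose proof (sin2_cos2 w) as Hw.
  unfold Rsqr in Hw.
  set (c := cos w) in *. set (sn := sin w) in *.
  set (Cr := Cf k rr) in *. set (lr := ell k rr) in *.
  set (Cx := Cf k xx). set (lx := ell k xx).
  set (Ct := Cf k t0) in *. set (lt := ell k t0) in *.
  assert (HP1 := f_equal v1 HP). assert (HP2 := f_equal v2 HP). assert (HP3 := f_equal v3 HP).
  unfold geod, vadd, vscal, rotcw, rotccw, Opt, dirO in HP1, HP2, HP3. simpl in HP1, HP2, HP3.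
  fold c sn Cr lr Cx lx in HP1, HP2, HP3.
  change (1 - k * acurv k xx) with Cx in HP1, HP2, HP3.
  change (1 - k * acurv k rr) with Cr in HP1, HP2, HP3.
  assert (E1 : v1 (P s) = Cx * lr * c + lx * sn).
  { rewrite HP1. transitivity (Cx*lr*c + lx*sn*(Cr*Cr+k*(lr*lr))); [ring|rewrite Hr; ring]. }
  assert (E2 : v2 (P s) = Cx * lr * sn - lx * c).
  { rewrite HP2. transitivity (Cx*lr*sn - lx*c*(Cr*Cr+k*(lr*lr))); [ring|rewrite Hr; ring]. }
  assert (E3 : v3 (P s) = Cx * Cr).
  { rewrite HP3. ring. }
  split; [auto|split; [auto|split; [auto|]]].
  assert (HF1 := f_equal v1 HF). assert (HF2 := f_equal v2 HF). assert (HF3 := f_equal v3 HF).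
  unfold geod, vadd, vscal, Opt, dirO in HF1, HF2, HF3. simpl in HF1, HF2, HF3.
  change (1 - k * acurv k rr) with Cr in HF1, HF2, HF3.
  change (1 - k * acurv k t0) with Ct in HF1, HF2, HF3.
  fold c sn lr lt in HF1, HF2, HF3.
  set (LT := Cr * (v1 T * c + v2 T * sn) - lr * v3 T).
  assert (LP : Cr * (v1 (P s) * c + v2 (P s) * sn) - lr * v3 (P s) = 0).
  { rewrite E1, E2, E3. transitivity (Cr*Cx*lr*(c*c+sn*sn - 1)); [ring|]. rewrite (Rplus_comm (c*c)), Hw. ring. }
  assert (LF : lt * LT = 0).
  { transitivity (Cr * ((Cr * 0 + lr * c) * c + (Cr * 0 + lr * sn) * sn) - lr * (Cr * 1 + lr * 0)
                  - Ct * (Cr * (v1 (P s) * c + v2 (P s) * sn) - lr * v3 (P s))).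
    - rewrite HF1, HF2, HF3. unfold LT, T, vderive; simpl. ring.
    - rewrite LP. transitivity (Cr*lr*(c*c+sn*sn - 1)); [ring|]. rewrite (Rplus_comm (c*c)), Hw. ring. }
  unfold gmet in HN. simpl in HN. change (1 - k * acurv k rr) with Cr in HN. change (1 - k * acurv k t0) with Ct in HN.
  fold c sn lr lt in HN.
  destruct (Req_EM_T k 0) as [Hk|Hk].
  - subst k.
    assert (HCt : Ct = 1) by (unfold Ct; apply (spec_zero 0 t0 eq_refl)).
    rewrite HCt in HN. unfold LT. pose proof (Hk0 eq_refl) as H30. unfold T in H30 |- *. rewrite H30.
    unfold T, vderive in HN |- *; simpl in HN |- *. nra.
  - assert (LCt : Ct * LT = 0).
    { transitivity ((- k * lr * 0 + Cr * c) * (- k * lt * v1 (P s) + Ct * v1 T) +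
       (- k * lr * 0 + Cr * sn) * (- k * lt * v2 (P s) + Ct * v2 T) +
       (- k * lr * 1 + Cr * 0) * (- k * lt * v3 (P s) + Ct * v3 T) / k
       + k * lt * (Cr * (v1 (P s) * c + v2 (P s) * sn) - lr * v3 (P s))).
      - unfold LT, T, vderive; simpl. field. auto.
      - unfold T, vderive; simpl. rewrite HN, LP. ring. }
    transitivity (Ct * (Ct * LT) + k * lt * (lt * LT)).
    + transitivity (LT * (Ct * Ct + k * (lt * lt))); [rewrite Ht; ring|ring].
    + rewrite LCt, LF. ring.
Qed.

Lemma k0_consts k P : k = 0 -> (forall s, inM k (P s)) ->
  forall s, v3 (P s) = 1 /\ v3 (vderive P s) = 0 /\ v3 (vderive (vderive P) s) = 0.
Proof.
  intros Hk Hin.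
  assert (H1 : forall s, v3 (P s) = 1).
  { intros s. destruct (Hin s) as [Hq Hp]. unfold kdot in Hq. subst k.
    destruct Hp as [Hp|Hp]; [lra|]. nra. }
  assert (H2 : forall s, v3 (vderive P s) = 0).
  { intros s. unfold vderive; simpl. rewrite (Derive_ext _ (fun _ => 1) s H1). apply Derive_const. }
  intros s. split; [auto|split; [auto|]].
  change (Derive (fun t => v3 (vderive P t)) s = 0). rewrite (Derive_ext _ (fun _ => 0) s H2). apply Derive_const.
Qed.

Lemma kdotPT k P s : (forall s, inM k (P s)) -> C2curve P -> kdot k (P s) (vderive P s) = 0.
Proof.
  intros Hin [H1' [H2' H3']].
  destruct (H1' s) as [H1 _]. destruct (H2' s) as [H2 _]. destruct (H3' s) as [H3 _].
  apply Derive_correct in H1. apply Derive_correct in H2. apply Derive_correct in H3.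
  set (f := fun t => k * (v1 (P t) * v1 (P t) + v2 (P t) * v2 (P t)) + v3 (P t) * v3 (P t)).
  pose proof (dmult (fun _ => k) (fun t => v1 (P t)*v1 (P t) + v2 (P t)*v2 (P t)) s 0 _ (dconst k s)
     (dplus _ _ _ _ _ (dmult _ _ _ _ _ H1 H1) (dmult _ _ _ _ _ H2 H2))) as A.
  pose proof (dplus _ _ _ _ _ A (dmult _ _ _ _ _ H3 H3)) as Hf. simpl in Hf.
  change (is_derive f s ((0 * (v1 (P s) * v1 (P s) + v2 (P s) * v2 (P s)) +
          k *
          (Derive (fun s0 : R => v1 (P s0)) s * v1 (P s) +
           v1 (P s) * Derive (fun s0 : R => v1 (P s0)) s +
           (Derive (fun s0 : R => v2 (P s0)) s * v2 (P s) +
            v2 (P s) * Derive (fun s0 : R => v2 (P s0)) s)) +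
          (Derive (fun s0 : R => v3 (P s0)) s * v3 (P s) +
           v3 (P s) * Derive (fun s0 : R => v3 (P s0)) s)))) in Hf.
  assert (Hc : is_derive f s 0).
  { eapply is_derive_ext with (f := fun _ => 1); [|apply dconst].
    intros t. unfold f. destruct (Hin t) as [Hq _]. unfold kdot in Hq. lra. }
  apply is_derive_unique in Hf. apply is_derive_unique in Hc. rewrite Hf in Hc.
  unfold kdot, vderive; simpl. nra.
Qed.

Lemma pt_facts k K P om r x s :
  (forall s, inM k (P s)) -> (forall s, 0 < v3 (P s)) -> C2curve P -> (forall s, unitM k (vderive P s)) ->
  (forall s, support_data k K P s (om s) (r s) (x s)) ->
  let c := cos (om s) in let sn := sin (om s) in
  let Cr := Cf k (r s) in let lr := ell k (r s) in let Cx := Cf k (x s) in let lx := ell k (x s) in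
  let P1 := v1 (P s) in let P2 := v2 (P s) in let P3 := v3 (P s) in
  let T1 := v1 (vderive P s) in let T2 := v2 (vderive P s) in let T3 := v3 (vderive P s) in
  let V1 := v1 (vderive (vderive P) s) in let V2 := v2 (vderive (vderive P) s) in
  let V3 := v3 (vderive (vderive P) s) in
  0 < Cr /\ 0 < Cx /\ Dk k (r s) /\
  Cr*(P1*c+P2*sn) - lr*P3 = 0 /\ Cr*(T1*c+T2*sn) - lr*T3 = 0 /\
  -P1*sn + P2*c = -lx /\ P1*c + P2*sn = Cx*lr /\ P3 = Cx*Cr /\
  exists mu, mu*mu = 1 /\ T3*(-P1*sn+P2*c) - P3*(-T1*sn+T2*c) = mu*Cr /\
     kappa_g k P s = mu*(Cr*(V1*c+V2*sn) - lr*V3).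
Proof.
  intros Hin Hpos HC2 Hunit Hsd c sn Cr lr Cx lx P1 P2 P3 T1 T2 T3 V1 V2 V3.
  assert (HD : Dk k (r s)) by (destruct (Hsd s) as [_ [_ [H _]]]; exact H).
  assert (HCr : 0 < Cr) by (apply Cf_pos; auto).
  assert (Hk0 : k = 0 -> v3 (vderive P s) = 0) by (intros Hk; apply (k0_consts k P Hk Hin s)).
  destruct (sd_extract k K P s (om s) (r s) (x s) (Hsd s) Hk0 HCr) as [E1 [E2 [E3 LT]]].
  fold c sn Cr lr Cx lx P1 P2 P3 T1 T2 T3 in E1, E2, E3, LT.
  assert (HCx : 0 < Cx).
  { pose proof (Hpos s) as Hp. fold P3 in Hp. rewrite E3 in Hp.
    destruct (Rlt_le_dec 0 Cx); auto. nra. }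
  pose proof (sin2_cos2 (om s)) as Hw. unfold Rsqr in Hw. fold c sn in Hw.
  assert (Hcs : c*c + sn*sn = 1) by lra.
  pose proof (pyth k (r s)) as Hr. pose proof (pyth k (x s)) as Hx. fold Cr lr in Hr. fold Cx lx in Hx.
  assert (LP : Cr*(P1*c+P2*sn) - lr*P3 = 0).
  { rewrite E1, E2, E3. transitivity (Cr*Cx*lr*(c*c+sn*sn - 1)); [ring|]. rewrite Hcs. ring. }
  assert (PU : P1*c + P2*sn = Cx*lr).
  { rewrite E1, E2. transitivity (Cx*lr*(c*c+sn*sn)); [ring|]. rewrite Hcs. ring. }
  assert (PV : -P1*sn + P2*c = -lx).
  { rewrite E1, E2. transitivity (-lx*(c*c+sn*sn)); [ring|]. rewrite Hcs. ring. }
  set (a := T1*c + T2*sn). set (b := -sn*T1 + c*T2).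
  assert (HT1 : T1 = a*c - b*sn).
  { unfold a, b. transitivity (T1*(c*c+sn*sn)); [rewrite Hcs; ring|ring]. }
  assert (HT2 : T2 = a*sn + b*c).
  { unfold a, b. transitivity (T2*(c*c+sn*sn)); [rewrite Hcs; ring|ring]. }
  assert (EA : Cr*a - lr*T3 = 0) by (unfold a; lra).
  assert (EB : k*(Cx*lr*a - lx*b) + Cx*Cr*T3 = 0).
  { pose proof (kdotPT k P s Hin HC2) as Hkd. unfold kdot in Hkd. fold P1 P2 P3 T1 T2 T3 in Hkd.
    assert (X : P1*T1+P2*T2 = a*(Cx*lr) + b*(-lx)) by (rewrite <- PU, <- PV, HT1, HT2; ring).
    rewrite X, E3 in Hkd. rewrite <- Hkd. ring. }
  destruct (alg_ab k c sn Cr lr Cx lx a b T3 Hcs Hr Hx HCr HCx EA EB) as [HT3 Ha].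
  pose proof (alg_main k c sn Cr lr Cx lx a b T3 Hcs Hr Hx HCr HCx HT3 Ha) as AM. simpl in AM.
  rewrite <- E1, <- E2, <- E3, <- HT1, <- HT2 in AM.
  destruct AM as [AD [AW1 [AW2 AW3]]].
  assert (Hmu : (-b/Cx)*(-b/Cx) = 1).
  { apply (alg_mu k c sn Cr lr Cx lx a b T3 Hcs Hr Hx HCr HCx HT3 Ha); simpl; rewrite <- HT1, <- HT2.
    - intros Hk. pose proof (Hunit s) as Hu. unfold unitM, gmet in Hu.
      destruct (Req_EM_T k 0); [contradiction|]. fold T1 T2 T3 in Hu.
      apply (Rmult_eq_reg_r (/k)); [|apply Rinv_neq_0_compat; auto].
      rewrite Rinv_r by auto. rewrite <- Hu. field. auto.
    - intros Hk. pose proof (Hunit s) as Hu. unfold unitM, gmet in Hu.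
      destruct (Req_EM_T k 0); [|contradiction]. fold T1 T2 T3 in Hu. lra. }
  repeat split; auto.
  exists (-b/Cx). split; auto. split; auto.
  unfold kappa_g, gmet. simpl. fold P1 P2 P3.
  change (Derive (fun s0 : R => v1 (P s0)) s) with T1.
  change (Derive (fun s0 : R => v2 (P s0)) s) with T2.
  change (Derive (fun s0 : R => v3 (P s0)) s) with T3.
  change (Derive (fun s0 : R => Derive (fun s1 : R => v1 (P s1)) s0) s) with V1.
  change (Derive (fun s0 : R => Derive (fun s1 : R => v2 (P s1)) s0) s) with V2.
  change (Derive (fun s0 : R => Derive (fun s1 : R => v3 (P s1)) s0) s) with V3.
  rewrite AW1, AW2, AW3. destruct (Req_dec_T k 0) as [Hk|Hk].
  - assert (V3 = 0) by (apply (k0_consts k P Hk Hin s)). rewrite H. ring.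
  - field. split; lra.
Qed.


Lemma C2_derivs P : C2curve P -> forall t,
  is_derive (fun t => v1 (P t)) t (v1 (vderive P t)) /\
  is_derive (fun t => v2 (P t)) t (v2 (vderive P t)) /\
  is_derive (fun t => v3 (P t)) t (v3 (vderive P t)) /\
  is_derive (fun t => v1 (vderive P t)) t (v1 (vderive (vderive P) t)) /\
  is_derive (fun t => v2 (vderive P t)) t (v2 (vderive (vderive P) t)) /\
  is_derive (fun t => v3 (vderive P t)) t (v3 (vderive (vderive P) t)).
Proof.
  intros [H1 [H2 H3]] t.
  destruct (H1 t) as [A1 [B1 _]]. destruct (H2 t) as [A2 [B2 _]]. destruct (H3 t) as [A3 [B3 _]].
  repeat split; apply Derive_correct; auto.
Qed.

Lemma om_deriv k K P om r x s :
  (forall s, inM k (P s)) -> (forall s, 0 < v3 (P s)) -> C2curve P -> (forall s, unitM k (vderive P s)) ->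
  (forall s, support_data k K P s (om s) (r s) (x s)) -> continuity om ->
  is_derive om s (Cf k (x s) * kappa_g k P s / Cf k (r s)).
Proof.
  intros Hin Hpos HC2 Hunit Hsd Hom.
  pose proof (C2_derivs P HC2) as Hd.
  pose (a1 := fun t => v1 (P t) * v3 (vderive P t) - v1 (vderive P t) * v3 (P t)).
  pose (a2 := fun t => v2 (P t) * v3 (vderive P t) - v2 (vderive P t) * v3 (P t)).
  assert (Hg : forall t, a1 t * cos (om t) + a2 t * sin (om t) = 0).
  { intros t. pose proof (pt_facts k K P om r x t Hin Hpos HC2 Hunit Hsd) as PF. cbv zeta in PF.
    destruct PF as [HCr [_ [_ [LP [LT _]]]]]. apply (Rmult_eq_reg_l (Cf k (r t))); [|lra]. unfold a1, a2.
    transitivity (v3 (vderive P t) * (Cf k (r t) * (v1 (P t) * cos (om t) + v2 (P t) * sin (om t)) - ell k (r t) * v3 (P t))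
       - v3 (P t) * (Cf k (r t) * (v1 (vderive P t) * cos (om t) + v2 (vderive P t) * sin (om t)) - ell k (r t) * v3 (vderive P t))); [ring|].
    rewrite LP, LT. ring. }
  destruct (Hd s) as [dP1 [dP2 [dP3 [dT1 [dT2 dT3]]]]].
  set (c0 := cos (om s)). set (s0 := sin (om s)).
  set (P1 := v1 (P s)) in *. set (P2 := v2 (P s)) in *. set (P3 := v3 (P s)) in *.
  set (T1 := v1 (vderive P s)) in *. set (T2 := v2 (vderive P s)) in *. set (T3 := v3 (vderive P s)) in *.
  set (V1 := v1 (vderive (vderive P) s)) in *. set (V2 := v2 (vderive (vderive P) s)) in *.
  set (V3 := v3 (vderive (vderive P) s)) in *.
  pose (m := fun t => a1 t * c0 + a2 t * s0).
  set (m' := ((T1 * T3 + P1 * V3) - (V1 * P3 + T1 * T3)) * c0 + ((T2 * T3 + P2 * V3) - (V2 * P3 + T2 * T3)) * s0).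
  assert (Hm : is_derive m s m').
  { pose proof (dplus _ _ _ _ _
      (dmult _ (fun _ => c0) _ _ _ (dminus _ _ _ _ _ (dmult _ _ _ _ _ dP1 dT3) (dmult _ _ _ _ _ dT1 dP3)) (dconst c0 s))
      (dmult _ (fun _ => s0) _ _ _ (dminus _ _ _ _ _ (dmult _ _ _ _ _ dP2 dT3) (dmult _ _ _ _ _ dT2 dP3)) (dconst s0 s))) as X.
    match type of X with is_derive _ _ ?v => replace m' with v by (unfold m', P1, P2, P3, T1, T2, T3, V1, V2, V3, c0, s0; cbv beta; ring) end.
    exact X. }
  pose (Sc := slope cos (om s) (- sin (om s))). pose (Ss := slope sin (om s) (cos (om s))).
  pose (H := fun t => a1 t * Sc (om t) + a2 t * Ss (om t)).
  assert (Ha1 : continuity_pt a1 s) by (unfold a1; apply cminus; apply cmult; eapply cderiv; eauto).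
  assert (Ha2 : continuity_pt a2 s) by (unfold a2; apply cminus; apply cmult; eapply cderiv; eauto).
  assert (HomS : continuity_pt om s) by apply Hom.
  assert (HH : continuity_pt H s).
  { unfold H. apply cplus; apply cmult; auto; apply ccomp; auto; apply slope_cont;
    [apply is_derive_cos|apply is_derive_sin]. }
  pose proof (pt_facts k K P om r x s Hin Hpos HC2 Hunit Hsd) as PF. cbv zeta in PF.
  destruct PF as [HCr [HCx [_ [LP [LT [PV [PU [E3 [mu [Hmu [HD Hk]]]]]]]]]]].
  fold c0 s0 P1 P2 P3 T1 T2 T3 V1 V2 V3 in LP, LT, PV, PU, E3, HD, Hk.
  assert (Hs : H s = mu * Cf k (r s)).
  { unfold H, Sc, Ss. rewrite !slope_at. rewrite <- HD. unfold a1, a2. fold P1 P2 P3 T1 T2 T3 c0 s0. ring. }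
  assert (Hmu0 : mu <> 0) by (intro; subst; lra).
  assert (Hsnz : H s <> 0) by (rewrite Hs; apply Rmult_integral_contrapositive; split; lra).
  destruct (cont_nz H s HH Hsnz) as [d [Hd0 Hdnz]].
  pose (Sm := slope m s m').
  assert (HSm : continuity_pt Sm s) by (apply slope_cont; auto).
  assert (Hm0 : m s = 0) by (unfold m; apply Hg).
  pose (S := fun t => - Sm t / H t).
  assert (HS : continuity_pt S s) by (unfold S; apply cdiv; auto; apply copp; auto).
  assert (Hder : is_derive om s (S s)).
  { apply deriv_from_slope; auto. exists d. split; auto. intros t Ht.
    specialize (Hdnz t Ht). unfold S.
    pose proof (slope_eq m s m' t) as E1. fold Sm in E1. rewrite Hm0 in E1.
    pose proof (slope_eq cos (om s) (- sin (om s)) (om t)) as E2. fold Sc in E2.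
    pose proof (slope_eq sin (om s) (cos (om s)) (om t)) as E4. fold Ss in E4.
    pose proof (Hg t) as Hgt.
    assert (Hk1 : (om t - om s) * H t = - ((t - s) * Sm t)).
    { unfold H. rewrite <- E1. unfold m. fold c0 s0 in E2, E4.
      transitivity (a1 t * ((om t - om s) * Sc (om t)) + a2 t * ((om t - om s) * Ss (om t))); [ring|].
      rewrite <- E2, <- E4. lra. }
    field_simplify; auto. apply (Rmult_eq_reg_r (H t)); auto. rewrite Hk1. field. auto. }
  replace (Cf k (x s) * kappa_g k P s / Cf k (r s)) with (S s); auto.
  unfold S, Sm. rewrite slope_at, Hs, Hk. unfold m'.
  assert (Hinv : / mu = mu).
  { apply (Rmult_eq_reg_l mu); auto. rewrite Rinv_r; auto. }
  assert (Hnum : (T1*T3 + P1*V3 - (V1*P3 + T1*T3))*c0 + (T2*T3+P2*V3 - (V2*P3+T2*T3))*s0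
     = V3*(P1*c0+P2*s0) - P3*(V1*c0+V2*s0)) by ring.
  rewrite Hnum, PU, E3. unfold Rdiv. rewrite Rinv_mult, Hinv. field. lra.
Qed.

Lemma Dk_open k y : Dk k y -> exists e, 0 < e /\ forall z, Rabs (z - y) < e -> Dk k z.
Proof.
  intros HD. destruct (Rlt_dec 0 k) as [Hk|Hk].
  - specialize (HD Hk). assert (0 < sqrt k) by (apply sqrt_lt_R0; lra).
    exists ((PI/2 - Rabs y * sqrt k) / sqrt k). split.
    + apply Rdiv_lt_0_compat; lra.
    + intros z Hz _. assert (Rabs z <= Rabs y + Rabs (z - y)).
      { replace z with (y + (z - y)) at 1 by ring. apply Rabs_triang. }
      apply (Rmult_lt_compat_r (sqrt k)) in Hz; auto.
      replace ((PI / 2 - Rabs y * sqrt k) / sqrt k * sqrt k) with (PI/2 - Rabs y * sqrt k) in Hz by (field; lra).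
      nra.
  - exists 1. split; [lra|]. intros z _ Hk'. lra.
Qed.

Lemma r_deriv k K P om r x s :
  (forall s, inM k (P s)) -> (forall s, 0 < v3 (P s)) -> C2curve P -> (forall s, unitM k (vderive P s)) ->
  (forall s, support_data k K P s (om s) (r s) (x s)) -> continuity om ->
  is_derive r s (- Cf k (r s) * ell k (x s) * (Cf k (x s) * kappa_g k P s / Cf k (r s)) / Cf k (x s)).
Proof.
  intros Hin Hpos HC2 Hunit Hsd Hom.
  set (w' := Cf k (x s) * kappa_g k P s / Cf k (r s)).
  assert (Hw' : is_derive om s w') by (apply (om_deriv k K P); auto).
  pose proof (C2_derivs P HC2) as Hd.
  pose (A := fun t => v1 (P t) * cos (om t) + v2 (P t) * sin (om t)).
  assert (HG : forall t, Cf k (r t) * A t - ell k (r t) * v3 (P t) = 0).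
  { intros t. pose proof (pt_facts k K P om r x t Hin Hpos HC2 Hunit Hsd) as PF. cbv zeta in PF.
    destruct PF as [_ [_ [_ [LP _]]]]. exact LP. }
  assert (HDt : forall t, Dk k (r t)).
  { intros t. pose proof (pt_facts k K P om r x t Hin Hpos HC2 Hunit Hsd) as PF. cbv zeta in PF.
    destruct PF as [_ [_ [HD _]]]. exact HD. }
  assert (HCt : forall t, 0 < Cf k (r t)) by (intros; apply Cf_pos; auto).
  destruct (Hd s) as [dP1 [dP2 [dP3 [dT1 [dT2 dT3]]]]].
  assert (HomS : continuity_pt om s) by apply Hom.
  assert (HA : continuity_pt A s).
  { unfold A. apply cplus; apply cmult.
    - eapply cderiv; exact dP1.
    - apply (ccomp cos om s HomS). apply continuity_cos.
    - eapply cderiv; exact dP2.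
    - apply (ccomp sin om s HomS). apply continuity_sin. }
  assert (HP3 : continuity_pt (fun t => v3 (P t)) s) by (eapply cderiv; eauto).
  assert (Hrc : continuity_pt r s).
  { apply (cont_mono (fun y => ell k y / Cf k y) r (Dk k) s).
    - intros; apply tau_incr; auto.
    - apply Dk_open; auto.
    - exists 1. split; [lra|]. intros; auto.
    - assert (Hq : forall t, ell k (r t) / Cf k (r t) = A t / v3 (P t)).
      { intros t. pose proof (HG t). pose proof (HCt t). pose proof (Hpos t).
        field_simplify_eq; [lra|lra]. }
      assert (Hqc : continuity_pt (fun t => A t / v3 (P t)) s) by (apply cdiv; auto; pose proof (Hpos s); lra).
      intros eps He. destruct (proj1 (cont_iff _ _) Hqc eps He) as [d [Hd0 Hd1]].
      exists d. split; auto. intros t Ht. rewrite !Hq. apply Hd1; auto. }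
  pose proof (pt_facts k K P om r x s Hin Hpos HC2 Hunit Hsd) as PF. cbv zeta in PF.
  destruct PF as [HCr [HCx [HDs [LP [LT [PV [PU [E3 _]]]]]]]].
  pose (SC := slope (Cf k) (r s) (- k * ell k (r s))). pose (SL := slope (ell k) (r s) (Cf k (r s))).
  pose (H2 := fun t => SC (r t) * A t - SL (r t) * v3 (P t)).
  assert (HH2 : continuity_pt H2 s).
  { unfold H2. apply cminus; apply cmult; auto; apply (ccomp _ r s Hrc); apply slope_cont;
    [apply deriv_Cf|apply deriv_ell]. }
  assert (HAs : A s = Cf k (x s) * ell k (r s)) by (unfold A; exact PU).
  assert (H2s : H2 s = - Cf k (x s)).
  { unfold H2, SC, SL. rewrite !slope_at, HAs, E3. pose proof (pyth k (r s)).
    transitivity (- Cf k (x s) * (Cf k (r s) * Cf k (r s) + k * (ell k (r s) * ell k (r s)))); [ring|].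
    rewrite H. ring. }
  assert (H2nz : H2 s <> 0) by (rewrite H2s; lra).
  destruct (cont_nz H2 s HH2 H2nz) as [d [Hd0 Hdnz]].
  pose (m2 := fun t => Cf k (r s) * A t - ell k (r s) * v3 (P t)).
  pose proof (dcomp cos om s _ _ (is_derive_cos (om s)) Hw') as Dc.
  pose proof (dcomp sin om s _ _ (is_derive_sin (om s)) Hw') as Ds.
  pose proof (dminus _ _ _ _ _ (dmult (fun _ => Cf k (r s)) A s _ _ (dconst _ s)
        (dplus _ _ _ _ _ (dmult _ _ _ _ _ dP1 Dc) (dmult _ _ _ _ _ dP2 Ds)))
       (dmult (fun _ => ell k (r s)) _ s _ _ (dconst _ s) dP3)) as X.
  match type of X with is_derive _ _ ?v => assert (X2 : is_derive m2 s v) by exact X; set (m2' := v) in X2 end.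
  clear X.
  assert (Hm2' : m2' = - Cf k (r s) * ell k (x s) * w').
  { unfold m2'. cbv beta.
    transitivity (Cf k (r s) * (v1 (vderive P s) * cos (om s) + v2 (vderive P s) * sin (om s)) - ell k (r s) * v3 (vderive P s)
       + Cf k (r s) * w' * (- v1 (P s) * sin (om s) + v2 (P s) * cos (om s))); [unfold A; ring|].
    rewrite LT, PV. ring. }
  pose (Sm := slope m2 s m2').
  assert (HSm : continuity_pt Sm s) by (apply slope_cont; auto).
  assert (Hm0 : m2 s = 0) by (unfold m2; apply HG).
  pose (S := fun t => - Sm t / H2 t).
  assert (HS : continuity_pt S s) by (unfold S; apply cdiv; auto; apply copp; auto).
  assert (Hder : is_derive r s (S s)).
  { apply deriv_from_slope; auto. exists d. split; auto. intros t Ht.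
    specialize (Hdnz t Ht). unfold S.
    pose proof (slope_eq m2 s m2' t) as E1. fold Sm in E1. rewrite Hm0 in E1.
    pose proof (slope_eq (Cf k) (r s) (- k * ell k (r s)) (r t)) as E2. fold SC in E2.
    pose proof (slope_eq (ell k) (r s) (Cf k (r s)) (r t)) as E4. fold SL in E4.
    pose proof (HG t) as Hgt.
    assert (Hk1 : (r t - r s) * H2 t = - ((t - s) * Sm t)).
    { unfold H2. rewrite <- E1. unfold m2.
      transitivity (((r t - r s) * SC (r t)) * A t - ((r t - r s) * SL (r t)) * v3 (P t)); [ring|].
      rewrite <- E2, <- E4. lra. }
    field_simplify; auto. apply (Rmult_eq_reg_r (H2 t)); auto. rewrite Hk1. field. auto. }
  replace (- Cf k (r s) * ell k (x s) * w' / Cf k (x s)) with (S s); auto.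
  unfold S, Sm. rewrite slope_at, H2s, Hm2'. field. lra.
Qed.


Theorem mainTheorem8 (k : R) (K : V3 -> Prop) (P : R -> V3) (L : R)
    (om r x : R -> R) :
  convex_body k K ->
  arclength_boundary k K P L ->
  ccw_oriented k K P ->
  (forall s, 0 < kappa_g k P s) ->
  continuity om ->
  (forall s, support_data k K P s (om s) (r s) (x s)) ->
  (forall s1 s2, s1 < s2 -> om s1 < om s2) /\
  exists h : R -> R,
    (forall s, r s = h (om s)) /\
    (forall s,
       is_derive h (om s)
         (- ((1 - k * acurv k (r s)) * ell k (x s)) / (1 - k * acurv k (x s))) /\
       (r s <> 0 ->
          is_derive h (om s) (- (ell k (r s) * ccurv k (r s)) / ccurv k (x s)))).
Proof.
  intros Hcb Hab _ Hkap Hom Hsd.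
  destruct Hcb as [HKM [_ [_ [_ [_ Hhemi]]]]].
  destruct Hab as [_ [_ [_ [Hbd [HC2 Hunit]]]]].
  assert (Hin : forall s, inM k (P s)).
  { intros s. apply HKM. destruct (proj2 (Hbd (P s)) (ex_intro _ s eq_refl)) as [HK _]. auto. }
  assert (Hpos : forall s, 0 < v3 (P s)).
  { intros s. destruct (Hin s) as [_ [Hk|Hp]]; auto. apply (Hhemi Hk).
    destruct (proj2 (Hbd (P s)) (ex_intro _ s eq_refl)) as [HK _]. auto. }
  set (w' := fun s => Cf k (x s) * kappa_g k P s / Cf k (r s)).
  assert (Hw' : forall s, is_derive om s (w' s)) by (intros; apply (om_deriv k K P); auto).
  assert (Hw'pos : forall s, 0 < w' s).
  { intros s. pose proof (pt_facts k K P om r x s Hin Hpos HC2 Hunit Hsd) as PF. cbv zeta in PF.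
    destruct PF as [HCr [HCx _]]. unfold w'. pose proof (Hkap s).
    apply Rdiv_lt_0_compat; auto. apply Rmult_lt_0_compat; auto. }
  assert (Hinc : forall s1 s2, s1 < s2 -> om s1 < om s2).
  { intros s1 s2 Hlt. apply (incr_function om m_infty p_infty w'); simpl; auto. intros; apply Hw'pos. }
  split; auto.
  assert (Hinj : forall s1 s2, om s1 = om s2 -> s1 = s2).
  { intros s1 s2 He. destruct (Rtotal_order s1 s2) as [Hl|[Hl|Hl]]; auto.
    - apply Hinc in Hl. lra.
    - apply Hinc in Hl. lra. }
  pose (sig := fun y => epsilon (inhabits 0) (fun s => om s = y)).
  assert (Hsig : forall y, (exists s, om s = y) -> om (sig y) = y).
  { intros y He. exact (epsilon_spec (inhabits 0) (fun s => om s = y) He). }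
  assert (Hsig0 : forall s, sig (om s) = s).
  { intros s. apply Hinj. apply Hsig. exists s; auto. }
  exists (fun y => r (sig y)). split.
  { intros s. rewrite Hsig0. auto. }
  intros s0.
  set (y0 := om s0).
  assert (Hlo : om (s0 - 1) < y0) by (apply Hinc; lra).
  assert (Hhi : y0 < om (s0 + 1)) by (apply Hinc; lra).
  set (d := Rmin (y0 - om (s0 - 1)) (om (s0 + 1) - y0)).
  assert (Hd : 0 < d) by (apply Rmin_pos; lra).
  assert (Hloc : forall y, Rabs (y - y0) < d -> om (sig y) = y).
  { intros y Hy. apply Hsig. pose proof (Rmin_l (y0 - om (s0 - 1)) (om (s0 + 1) - y0)).
    pose proof (Rmin_r (y0 - om (s0 - 1)) (om (s0 + 1) - y0)). fold d in H, H0.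
    apply Rabs_def2 in Hy.
    destruct (IVT_gen om (s0 - 1) (s0 + 1) y Hom) as [z [_ Hz]].
    - rewrite Rmin_left by lra. rewrite Rmax_right by lra. lra.
    - exists z; auto. }
  assert (Hsc : continuity_pt sig y0).
  { apply (cont_mono om sig (fun _ => True) y0).
    - intros; apply Hinc; auto.
    - exists 1. split; auto. lra.
    - exists 1. split; auto. lra.
    - intros eps He. exists (Rmin d eps). split; [apply Rmin_pos; lra|].
      intros t Ht. pose proof (Rmin_l d eps). pose proof (Rmin_r d eps).
      rewrite (Hloc t) by lra. unfold y0 in *. rewrite Hsig0. lra. }
  set (r' := - Cf k (r s0) * ell k (x s0) * w' s0 / Cf k (x s0)).
  assert (Hr' : is_derive r s0 r') by (apply (r_deriv k K P om r x s0); auto).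
  pose (Sr := slope r s0 r'). pose (Som := slope om s0 (w' s0)).
  assert (HSom : forall z, 0 < Som z).
  { intros z. unfold Som, slope. destruct (Req_EM_T z s0) as [_|Hne]; auto.
    destruct (Rtotal_order z s0) as [Hl|[Hl|Hl]]; [|contradiction|].
    - pose proof (Hinc _ _ Hl). apply Rdiv_neg_neg; lra.
    - pose proof (Hinc _ _ Hl). apply Rdiv_lt_0_compat; lra. }
  pose (S := fun y => Sr (sig y) / Som (sig y)).
  assert (HS : continuity_pt S y0).
  { unfold S. apply cdiv.
    - apply (ccomp Sr sig y0 Hsc). unfold y0. rewrite Hsig0. apply slope_cont; auto.
    - apply (ccomp Som sig y0 Hsc). unfold y0. rewrite Hsig0. apply slope_cont; auto.
    - pose proof (HSom (sig y0)). lra. }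
  assert (Hder : is_derive (fun y => r (sig y)) y0 (S y0)).
  { apply (deriv_from_slope (fun y => r (sig y)) y0 S); auto.
    exists d. split; auto. intros y Hy.
    pose proof (slope_eq r s0 r' (sig y)) as E1. fold Sr in E1.
    pose proof (slope_eq om s0 (w' s0) (sig y)) as E2. fold Som in E2.
    rewrite (Hloc y Hy) in E2. unfold y0 in *. rewrite Hsig0.
    pose proof (HSom (sig y)). unfold S.
    rewrite E1, E2. field. lra. }
  assert (HSy0 : S y0 = - Cf k (r s0) * ell k (x s0) / Cf k (x s0)).
  { unfold S, y0. rewrite Hsig0. unfold Sr, Som. rewrite !slope_at. unfold r'.
    pose proof (Hw'pos s0). 
    pose proof (pt_facts k K P om r x s0 Hin Hpos HC2 Hunit Hsd) as PF. cbv zeta in PF.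
    destruct PF as [HCr [HCx _]]. field. lra. }
  rewrite HSy0 in Hder. fold y0. split.
  - replace (- ((1 - k * acurv k (r s0)) * ell k (x s0)) / (1 - k * acurv k (x s0)))
      with (- Cf k (r s0) * ell k (x s0) / Cf k (x s0)) by (unfold Cf, Rdiv; ring). exact Hder.
  - intros Hr0. replace (- (ell k (r s0) * ccurv k (r s0)) / ccurv k (x s0))
      with (- Cf k (r s0) * ell k (x s0) / Cf k (x s0)); auto.
    pose proof (pt_facts k K P om r x s0 Hin Hpos HC2 Hunit Hsd) as PF. cbv zeta in PF.
    destruct PF as [HCr [HCx [HD _]]].
    pose proof (ell_nz k (r s0) HD Hr0) as Hl.
    rewrite !ccurv_eq. unfold Rdiv. rewrite (Rinv_mult (Cf k (x s0))), Rinv_inv. field. split; lra.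
Qed.
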